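(* For every set $\Gamma$ of triples about atomic actions, every program $C$ and all $P,Q\subseteq\Sigma$: if $\Gamma\vdash\{\mathbf 1P\}\ C\ \{\Box Q\}$ then $\Gamma\vdash\{\Box P\}\ C\ \{\Box Q\}$.
   Context: Partial semiring $\mathcal A=\langle U,+,\cdot,\mathbf 0,\mathbf 1\rangle$ ($+$ commutative, associative, possibly partial, unit $\mathbf 0$; $\cdot$ total, associative, unit $\mathbf 1$; two-sided distributivity; $\mathbf 0$ annihilates), naturally ordered, Scott continuous, with a top element; infinite sums are suprema of finite partial sums. $\mathcal W(\Sigma)$: maps $m:\Sigma\to U$ with countable support $\mathrm{supp}(m)=\{\sigma:m(\sigma)\ne\mathbf 0\}$ and defined mass $|m|=\sum_{\sigma\in\mathrm{supp}(m)}m(\sigma)$; operations pointwise. $\eta(\sigma)$ is $\mathbf 1$ at $\sigma$ and $\mathbf 0$ elsewhere; $f^\dagger(m)(\tau)=\sum_{\sigma\in\mathrm{supp}(m)}m(\sigma)\cdot f(\sigma)(\tau)$. Programs over states $\Sigma$: $C::=\mathsf{skip}\mid C_1;C_2\mid C_1+C_2\mid\mathsf{assume}\ e\mid C^{\langle e,e'\rangle}\mid a$ with atomic actions $a$ ($[\![a]\!]:\Sigma\to\mathcal W(\Sigma)$), $e$ a test (Boolean combination of $\mathsf{true},\mathsf{false}$ and primitive tests $t\subseteq\Sigma$, value $\mathbf 1$ iff true) or a weight $u\in U$; semantics $[\![\mathsf{skip}]\!](\sigma)=\eta(\sigma)$, $[\![C_1;C_2]\!](\sigma)=[\![C_2]\!]^\dagger([\![C_1]\!](\sigma))$,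 $[\![C_1+C_2]\!](\sigma)=[\![C_1]\!](\sigma)+[\![C_2]\!](\sigma)$, $[\![\mathsf{assume}\ e]\!](\sigma)=[\![e]\!](\sigma)\cdot\eta(\sigma)$, $[\![C^{\langle e,e'\rangle}]\!]$ the least fixed point of $\Phi(f)(\sigma)=[\![e]\!](\sigma)\cdot f^\dagger([\![C]\!](\sigma))+[\![e']\!](\sigma)\cdot\eta(\sigma)$. Assertions are subsets of $\mathcal W(\Sigma)$; $\bigoplus_{x\in T}\phi(x)=\{\sum_{t\in T}m_t: m_t\in\phi(t)\ \forall t\}$, $\varphi\oplus\psi$ the binary case, $u\odot\varphi=\{u\cdot m:m\in\varphi\}$, $\varphi\odot u=\{m\cdot u:m\in\varphi\}$; $\mathbf 1P=\{m:|m|=\mathbf 1,\mathrm{supp}(m)\subseteq P\}$, $\Box P=\{m:\mathrm{supp}(m)\subseteq P\}$. $\Gamma\vdash\{\varphi\}C\{\psi\}$ means derivable from the axioms in $\Gamma$ using: (Skip) $\{\varphi\}\mathsf{skip}\{\varphi\}$; (Seq) $\{\varphi\}C_1\{\vartheta\},\{\vartheta\}C_2\{\psi\}\Rightarrow\{\varphi\}C_1;C_2\{\psi\}$; (Plus) $\{\varphi\}C_1\{\psi_1\},\{\varphi\}C_2\{\psi_2\}\Rightarrow\{\varphi\}C_1+C_2\{\psi_1\oplus\psi_2\}$; (Assume) if $[\![e]\!](\sigma)=u$ for all $m\in\varphi,\sigma\in\mathrm{supp}(m)$ then $\{\varphi\}\mathsf{assume}\ e\{\varphi\odot u\}$; (Iter)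 if $(\psi_n)$ converges to $\psi_\infty$ (whenever $m_n\in\psi_n$ for all $n$, $\sum_n m_n\in\psi_\infty$) and for all $n$, $\{\varphi_n\}\mathsf{assume}\ e;C\{\varphi_{n+1}\}$ and $\{\varphi_n\}\mathsf{assume}\ e'\{\psi_n\}$, then $\{\varphi_0\}C^{\langle e,e'\rangle}\{\psi_\infty\}$; (False) $\{\emptyset\}C\{\varphi\}$; (True) $\{\varphi\}C\{\mathcal W(\Sigma)\}$; (Scale) $\{\varphi\}C\{\psi\}\Rightarrow\{u\odot\varphi\}C\{u\odot\psi\}$; (Disj), (Conj): from two triples infer the triple with $\cup$, resp. $\cap$, of pre- and postconditions; (Choice) $\forall t\in T.\{\phi(t)\}C\{\phi'(t)\}\Rightarrow\{\bigoplus_{x\in T}\phi(x)\}C\{\bigoplus_{x\in T}\phi'(x)\}$; (Exists) same premises $\Rightarrow\{\bigcup_t\phi(t)\}C\{\bigcup_t\phi'(t)\}$; (Consequence) $\varphi'\subseteq\varphi$, $\{\varphi\}C\{\psi\}$, $\psi\subseteq\psi'\Rightarrow\{\varphi'\}C\{\psi'\}$. *)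

(* Defs.v *)
From Stdlib Require Import List ClassicalEpsilon.
Import ListNotations.
Set Implicit Arguments.
Unset Strict Implicit.

Section PSR.
Variables (U : Type) (plus : U -> U -> option U) (zero : U).

Definition nle (u v : U) : Prop := exists w, plus u w = Some v.

Definition is_lub (D : U -> Prop) (s : U) : Prop :=
  (forall x, D x -> nle x s) /\ (forall b, (forall x, D x -> nle x b) -> nle s b).

Definition directed (D : U -> Prop) : Prop :=
  (exists x, D x) /\
  (forall x y, D x -> D y -> exists z, D z /\ nle x z /\ nle y z).

Inductive fsum : list U -> U -> Prop :=
| fsum_nil : fsum [] zero
| fsum_cons : forall u l s r, fsum l s -> plus u s = Some r -> fsum (u :: l) r.

Definition is_sum (I : Type) (f : I -> U) (s : U) : Prop :=
  (forall l : list I, NoDup l -> exists t, fsum (map f l) t) /\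
  is_lub (fun t => exists l : list I, NoDup l /\ fsum (map f l) t) s.
End PSR.

Definition obind {A B : Type} (f : A -> option B) (o : option A) : option B :=
  match o with Some a => f a | None => None end.

Record psemiring := PSemiring {
  car :> Type;
  pplus : car -> car -> option car;
  pmul : car -> car -> car;
  pzero : car;
  pone : car;
  pplus_comm : forall u v, pplus u v = pplus v u;
  pplus_assoc : forall u v w,
    obind (fun x => pplus x w) (pplus u v) =
    obind (fun y => pplus u y) (pplus v w);
  pplus_0 : forall u, pplus u pzero = Some u;
  pmul_assoc : forall u v w, pmul u (pmul v w) = pmul (pmul u v) w;
  pmul_1l : forall u, pmul pone u = u;
  pmul_1r : forall u, pmul u pone = u;
  pmul_distl : forall u v w x, pplus v w = Some x ->
    pplus (pmul u v) (pmul u w) = Some (pmul u x);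
  pmul_distr : forall u v w x, pplus v w = Some x ->
    pplus (pmul v u) (pmul w u) = Some (pmul x u);
  pmul_0l : forall u, pmul pzero u = pzero;
  pmul_0r : forall u, pmul u pzero = pzero;
  pnle_antisym : forall u v, nle pplus u v -> nle pplus v u -> u = v;
  pdirected_sup : forall D, directed pplus D -> exists s, is_lub pplus D s;
  pmul_contl : forall u D s, directed pplus D -> is_lub pplus D s ->
    is_lub pplus (fun y => exists d, D d /\ y = pmul u d) (pmul u s);
  pmul_contr : forall u D s, directed pplus D -> is_lub pplus D s ->
    is_lub pplus (fun y => exists d, D d /\ y = pmul d u) (pmul s u);
  pplus_cont : forall u D s, directed pplus D -> is_lub pplus D s ->
    (forall d, D d -> exists r, pplus u d = Some r) ->
    exists r, pplus u s = Some r /\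
      is_lub pplus (fun y => exists d, D d /\ pplus u d = Some y) r;
  ptop : exists t, forall u, nle pplus u t
}.

Section Weightings.
Variables (S : psemiring) (Sigma : Type).

Definition le_S := nle (@pplus S).
Definition sum_S (I : Type) (f : I -> S) (s : S) := is_sum (@pplus S) (@pzero S) f s.

Definition countable (X : Sigma -> Prop) : Prop :=
  exists g : nat -> option Sigma, forall x, X x -> exists n, g n = Some x.

Definition supp (m : Sigma -> S) (x : Sigma) : Prop := m x <> pzero S.

Definition mass_is (m : Sigma -> S) (u : S) : Prop :=
  sum_S (fun x : {x : Sigma | supp m x} => m (proj1_sig x)) u.

Record wt := Wt {
  wfun :> Sigma -> S;
  wt_count : countable (supp wfun);
  wt_mass : exists u, mass_is wfun u
}.

Definition assertion := wt -> Prop.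

Definition Wall : assertion := fun _ => True.

Definition oneP (P : Sigma -> Prop) : assertion :=
  fun m => mass_is m (pone S) /\ (forall x, supp m x -> P x).

Definition boxP (P : Sigma -> Prop) : assertion :=
  fun m => forall x, supp m x -> P x.

Definition oplus (phi psi : assertion) : assertion :=
  fun m => exists m1 m2, phi m1 /\ psi m2 /\
    forall x, pplus (m1 x) (m2 x) = Some (m x).

Definition bigoplus (T : Type) (phi : T -> assertion) : assertion :=
  fun m => exists ms : T -> wt, (forall t, phi t (ms t)) /\
    forall x, sum_S (fun t => ms t x) (m x).

Definition bigcup (T : Type) (phi : T -> assertion) : assertion :=
  fun m => exists t, phi t m.

Definition scale_l (u : S) (phi : assertion) : assertion :=
  fun m => exists m', phi m' /\ forall x, m x = pmul u (m' x).

Definition scale_r (phi : assertion) (u : S) : assertion :=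
  fun m => exists m', phi m' /\ forall x, m x = pmul (m' x) u.

Definition subset (phi psi : assertion) : Prop := forall m, phi m -> psi m.

Inductive test :=
| TTrue | TFalse | TPrim (t : Sigma -> Prop)
| TNot (b : test) | TAnd (b1 b2 : test) | TOr (b1 b2 : test).

Fixpoint holds (b : test) (x : Sigma) : Prop :=
  match b with
  | TTrue => True | TFalse => False | TPrim t => t x
  | TNot b => ~ holds b x
  | TAnd b1 b2 => holds b1 x /\ holds b2 x
  | TOr b1 b2 => holds b1 x \/ holds b2 x
  end.

Inductive expr := ETest (b : test) | EWeight (u : S).

Definition eval (e : expr) (x : Sigma) : S :=
  match e with
  | ETest b => if excluded_middle_informative (holds b x) then pone S else pzero S
  | EWeight u => u
  end.

Variable Act : Type.

Inductive prog :=
| Skip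
| Seq (C1 C2 : prog)
| Plus (C1 C2 : prog)
| Assume (e : expr)
| Iter (C : prog) (e e' : expr)
| Atom (a : Act).

Variable Gamma : assertion -> Act -> assertion -> Prop.

Definition converges (psi : nat -> assertion) (psiinf : assertion) : Prop :=
  forall (ms : nat -> wt) (m : wt), (forall n, psi n (ms n)) ->
    (forall x, sum_S (fun n => ms n x) (m x)) -> psiinf m.

Inductive derivable : assertion -> prog -> assertion -> Prop :=
| d_axiom : forall phi a psi, Gamma phi a psi -> derivable phi (Atom a) psi
| d_skip : forall phi, derivable phi Skip phi
| d_seq : forall phi th psi C1 C2,
    derivable phi C1 th -> derivable th C2 psi -> derivable phi (Seq C1 C2) psi
| d_plus : forall phi psi1 psi2 C1 C2,
    derivable phi C1 psi1 -> derivable phi C2 psi2 ->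
    derivable phi (Plus C1 C2) (oplus psi1 psi2)
| d_assume : forall phi e u,
    (forall m x, phi m -> supp m x -> eval e x = u) ->
    derivable phi (Assume e) (scale_r phi u)
| d_iter : forall (phis psis : nat -> assertion) psiinf C e e',
    converges psis psiinf ->
    (forall n, derivable (phis n) (Seq (Assume e) C) (phis (Datatypes.S n))) ->
    (forall n, derivable (phis n) (Assume e') (psis n)) ->
    derivable (phis 0) (Iter C e e') psiinf
| d_false : forall C phi, derivable (fun _ => False) C phi
| d_true : forall phi C, derivable phi C Wall
| d_scale : forall u phi psi C, derivable phi C psi ->
    derivable (scale_l u phi) C (scale_l u psi)
| d_disj : forall phi1 phi2 psi1 psi2 C,
    derivable phi1 C psi1 -> derivable phi2 C psi2 ->
    derivable (fun m => phi1 m \/ phi2 m) C (fun m => psi1 m \/ psi2 m)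
| d_conj : forall phi1 phi2 psi1 psi2 C,
    derivable phi1 C psi1 -> derivable phi2 C psi2 ->
    derivable (fun m => phi1 m /\ phi2 m) C (fun m => psi1 m /\ psi2 m)
| d_choice : forall (T : Type) (phi phi' : T -> assertion) C,
    (forall t, derivable (phi t) C (phi' t)) ->
    derivable (bigoplus phi) C (bigoplus phi')
| d_exists : forall (T : Type) (phi phi' : T -> assertion) C,
    (forall t, derivable (phi t) C (phi' t)) ->
    derivable (bigcup phi) C (bigcup phi')
| d_conseq : forall phi phi' psi psi' C,
    subset phi' phi -> derivable phi C psi -> subset psi psi' ->
    derivable phi' C psi'.
End Weightings.

(* Main.v *)
Require Import Defs.
From Stdlib Require Import List ClassicalEpsilon Classical ProofIrrelevance.
Import ListNotations.

Section Aux.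
Variable S : psemiring.

Lemma nle_refl (u : S) : nle (@pplus S) u u.
Proof. exists (pzero S). apply pplus_0. Qed.

Lemma nle_0 (u : S) : nle (@pplus S) (pzero S) u.
Proof. exists u. rewrite pplus_comm. apply pplus_0. Qed.

Lemma fsum_fun {l : list S} {s s'} :
  fsum (@pplus S) (pzero S) l s -> fsum (@pplus S) (pzero S) l s' -> s = s'.
Proof.
  intro H; revert s'; induction H; intros s' H'; inversion H'; subst; auto.
  match goal with H1 : fsum _ _ l ?s0 |- _ => specialize (IHfsum _ H1); subst end.
  congruence.
Qed.

Lemma sum_unique (I : Type) (f : I -> S) s s' :
  sum_S f s -> sum_S f s' -> s = s'.
Proof.
  intros [_ [H1 H2]] [_ [H1' H2']].
  apply pnle_antisym; [apply H2; exact H1' | apply H2'; exact H1].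
Qed.

Lemma sum_single (I : Type) (f : I -> S) (v : S) :
  (forall i, f i <> pzero S -> f i = v) ->
  (forall i j, f i <> pzero S -> f j <> pzero S -> i = j) ->
  (v <> pzero S -> exists i, f i <> pzero S) ->
  sum_S f v.
Proof.
  intros H1 H2 H3.
  assert (Z : forall l : list I, (forall i, In i l -> f i = pzero S) ->
            fsum (@pplus S) (pzero S) (map f l) (pzero S)).
  { induction l as [|a l IH]; intro Hl; simpl. constructor.
    econstructor. apply IH. intros; apply Hl; simpl; auto.
    rewrite (Hl a (or_introl eq_refl)). apply pplus_0. }
  assert (V : forall l : list I, NoDup l -> forall i0, In i0 l -> f i0 <> pzero S ->
            fsum (@pplus S) (pzero S) (map f l) v).
  { induction l as [|a l IH]; intros Hnd i0 Hin Hf; simpl. destruct Hin.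
    inversion Hnd; subst.
    destruct (classic (a = i0)) as [E|E].
    - subst. econstructor. apply Z. intros i Hi.
      destruct (classic (f i = pzero S)) as [F|F]; auto.
      exfalso. assert (i = i0) by (apply H2; auto). subst; auto.
      rewrite (H1 _ Hf). apply pplus_0.
    - destruct Hin as [Hin|Hin]; [contradiction|].
      econstructor. apply (IH H5 i0 Hin Hf).
      destruct (classic (f a = pzero S)) as [F|F].
      + rewrite F, pplus_comm. apply pplus_0.
      + exfalso. apply E. apply H2; auto. }
  assert (D : forall l : list I, NoDup l -> exists t, fsum (@pplus S) (pzero S) (map f l) t /\ (t = pzero S \/ t = v)).
  { intros l Hnd.
    destruct (classic (exists i0, In i0 l /\ f i0 <> pzero S)) as [[i0 [Hi Hf]]|N].
    - exists v; split; auto. eapply V; eauto.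
    - exists (pzero S); split; auto. apply Z. intros i Hi.
      apply NNPP; intro F; apply N; eauto. }
  split.
  - intros l Hnd. destruct (D l Hnd) as [t [Ht _]]; eauto.
  - split.
    + intros t [l [Hnd Ht]]. destruct (D l Hnd) as [t' [Ht' [E|E]]];
      rewrite (fsum_fun Ht Ht' : t = t'), E; [apply nle_0|apply nle_refl].
    + intros b Hb. destruct (classic (v = pzero S)) as [E|E].
      * rewrite E; apply nle_0.
      * destruct (H3 E) as [i Hi]. apply Hb. exists [i]. split.
        constructor; [simpl; tauto|constructor].
        simpl. econstructor. constructor. rewrite (H1 _ Hi). apply pplus_0.
Qed.

Lemma sum_zero (I : Type) (f : I -> S) :
  (forall i, f i = pzero S) -> sum_S f (pzero S).
Proof.
  intro H. apply sum_single; intros; try (exfalso; eauto; fail).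
Qed.

Variable Sigma : Type.

Definition sgl_f (t : Sigma) (u : S) : Sigma -> S :=
  fun x => if excluded_middle_informative (x = t) then u else pzero S.

Lemma sgl_count t u : countable (supp (sgl_f t u)).
Proof.
  exists (fun _ => Some t). intros x Hx. exists 0.
  unfold supp, sgl_f in Hx. destruct excluded_middle_informative; subst; auto.
  contradiction.
Qed.

Lemma sgl_mass t u : mass_is (sgl_f t u) u.
Proof.
  unfold mass_is. apply sum_single.
  - intros [x Hx]; simpl. unfold sgl_f in *.
    destruct excluded_middle_informative; auto. intro; contradiction.
  - intros [x Hx] [y Hy]; simpl; intros _ _.
    assert (x = t). { unfold supp, sgl_f in Hx; destruct excluded_middle_informative; auto; contradiction. }
    assert (y = t). { unfold supp, sgl_f in Hy; destruct excluded_middle_informative; auto; contradiction. }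
    subst. f_equal. apply proof_irrelevance.
  - intro Hu. assert (Ht : supp (sgl_f t u) t).
    { unfold supp, sgl_f; destruct excluded_middle_informative; auto. }
    exists (exist _ t Ht). simpl. exact Ht.
Qed.

Definition sgl (t : Sigma) (u : S) : wt S Sigma :=
  @Wt S Sigma (sgl_f t u) (sgl_count t u) (ex_intro _ u (sgl_mass t u)).

End Aux.

Theorem lemmaE1 (S : psemiring) (Sigma Act : Type)
  (Gamma : assertion S Sigma -> Act -> assertion S Sigma -> Prop)
  (C : prog S Sigma Act) (P Q : Sigma -> Prop) :
  derivable Gamma (oneP P) C (boxP Q) ->
  derivable Gamma (boxP P) C (boxP Q).
Proof.
  intro HD.
  apply (@d_conseq S Sigma Act Gamma
    (bigcup (fun m : wt S Sigma => bigoplus (fun t : {t : Sigma | P t} => scale_l (m (proj1_sig t)) (oneP P))))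
    _
    (bigcup (fun m : wt S Sigma => bigoplus (fun t : {t : Sigma | P t} => scale_l (m (proj1_sig t)) (boxP Q))))).
  - intros m Hm. exists m.
    exists (fun t : {t : Sigma | P t} => @sgl S Sigma (proj1_sig t) (m (proj1_sig t))). split.
    + intros [t Pt]; simpl. exists (@sgl S Sigma t (pone S)). split.
      * split. apply sgl_mass. intros x Hx. unfold supp in Hx; simpl in Hx.
        unfold sgl_f in Hx. destruct excluded_middle_informative; subst; auto. contradiction.
      * intro x; simpl; unfold sgl_f. destruct excluded_middle_informative.
        subst; rewrite pmul_1r; auto. rewrite pmul_0r; auto.
    + intro x. simpl. apply sum_single.
      * intros [t Pt]; simpl; unfold sgl_f. destruct excluded_middle_informative.
        subst; auto. intro; contradiction.
      * intros [t Pt] [t' Pt']; simpl; unfold sgl_f.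
        do 2 destruct excluded_middle_informative; subst; try (intros; contradiction).
        intros; f_equal; apply proof_irrelevance.
      * intro Hx. exists (exist _ x (Hm x Hx)). simpl. unfold sgl_f.
        destruct excluded_middle_informative; auto.
  - apply d_exists. intro m. apply d_choice. intro t. apply d_scale. exact HD.
  - intros m0 [m [ms [Hms Hsum]]] x Hx. apply NNPP; intro NQ. apply Hx.
    eapply sum_unique; [exact (Hsum x)|]. apply sum_zero. intro t.
    destruct (Hms t) as [m' [Hm' E]]. rewrite E.
    destruct (classic (m' x = pzero S)) as [Z|Z].
    + rewrite Z; apply pmul_0r.
    + exfalso; exact (NQ (Hm' x Z)).
Qed.
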